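(* For every agent $k$ and every $n\ge0$, $\|e_{k,n}\|\le B_e$ and $\|\widehat e_{k,n}\|\le B_e$, where $B_e:=\frac{1}{1-\lambda\gamma}\Big(\lambda+\frac{1-\lambda}{1-\gamma/b_\epsilon}\Big)$.
   Context: Constants $\lambda,\gamma\in(0,1)$ and $b_\epsilon>0$ with $\gamma<b_\epsilon$. For each agent $k$, importance ratios $\rho_{k,n},\widehat\rho_{k,n}>0$ satisfy $\rho_{k,n},\widehat\rho_{k,n}\le1/b_\epsilon$. Belief vectors $\mu_{k,n},\widehat\mu_{k,n}$ are probability vectors over a finite state set (so Euclidean norms are at most 1). Define $F_{k,0}=0$, $F_{k,n}=1+\gamma\rho_{k,n-1}F_{k,n-1}$, $M_{k,n}=\lambda+(1-\lambda)F_{k,n}$, $e_{k,-1}=0$, $e_{k,n}=\gamma\lambda e_{k,n-1}+M_{k,n}\mu_{k,n}$; the hatted quantities $\widehat F,\widehat M,\widehat e$ are defined identically with $\widehat\rho,\widehat\mu$ in place of $\rho,\mu$. $\|\cdot\|$ is the Euclidean norm. *)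

(* Defs.v *)
From HB Require Import structures.
From mathcomp Require Import all_boot all_order all_algebra.
Set Implicit Arguments. Unset Strict Implicit. Unset Printing Implicit Defensive.
Import Order.TTheory GRing.Theory Num.Theory.
Local Open Scope ring_scope.

Definition enorm (R : rcfType) (m : nat) (v : 'rV[R]_m) : R :=
  Num.sqrt (\sum_(i < m) (v 0 i) ^+ 2).

Definition prob_vec (R : rcfType) (m : nat) (v : 'rV[R]_m) : Prop :=
  (forall i, 0 <= v 0 i) /\ \sum_(i < m) v 0 i = 1.

Fixpoint Fseq (R : rcfType) (gamma : R) (rho : nat -> R) (n : nat) : R :=
  match n with
  | 0%N => 0
  | n'.+1 => 1 + gamma * rho n' * Fseq gamma rho n'
  end.

Definition Mseq (R : rcfType) (lambda gamma : R) (rho : nat -> R) (n : nat) : R :=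
  lambda + (1 - lambda) * Fseq gamma rho n.

(* eaux n = e_{n-1}; eaux 0 = e_{-1} = 0,
   e_n = gamma lambda e_{n-1} + M_n mu_n *)
Fixpoint eaux (R : rcfType) (m : nat) (lambda gamma : R) (rho : nat -> R)
    (mu : nat -> 'rV[R]_m) (n : nat) : 'rV[R]_m :=
  match n with
  | 0%N => 0
  | n'.+1 => (gamma * lambda) *: eaux lambda gamma rho mu n'
             + Mseq lambda gamma rho n' *: mu n'
  end.

Definition eseq (R : rcfType) (m : nat) (lambda gamma : R) (rho : nat -> R)
    (mu : nat -> 'rV[R]_m) (n : nat) : 'rV[R]_m :=
  eaux lambda gamma rho mu n.+1.

Definition Be (R : rcfType) (lambda gamma beps : R) : R :=
  (1 - lambda * gamma)^-1 * (lambda + (1 - lambda) / (1 - gamma / beps)).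

(* Main.v *)
Require Import Defs.
From HB Require Import structures.
From mathcomp Require Import all_boot all_order all_algebra.
From mathcomp Require Import ring lra.
Import Order.TTheory GRing.Theory Num.Theory.
Local Open Scope ring_scope.

Lemma enorm_le_sum {R : rcfType} {m : nat} {v : 'rV[R]_m} :
  (forall i, 0 <= v 0 i) -> enorm v <= \sum_(i < m) v 0 i.
Proof.
move=> H; rewrite /enorm.
have S0 : 0 <= \sum_(i < m) v 0 i by apply: sumr_ge0.
have -> : \sum_(i < m) v 0 i = Num.sqrt ((\sum_(i < m) v 0 i) ^+ 2).
  by rewrite sqrtr_sqr ger0_norm.
apply: ler_wsqrtr.
rewrite expr2 mulr_suml; apply: ler_sum => i _.
rewrite expr2; apply: ler_wpM2l => //.
rewrite (bigD1 i) //= lerDl; apply: sumr_ge0 => j _; exact: H.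
Qed.

Lemma one_seq (R : rcfType) (m : nat) (lambda gamma beps : R)
  (rho : nat -> R) (mu : nat -> 'rV[R]_m) :
  0 < lambda < 1 -> 0 < gamma < 1 -> 0 < beps -> gamma < beps ->
  (forall n, 0 < rho n /\ rho n <= 1 / beps) ->
  (forall n, prob_vec (mu n)) ->
  forall n, enorm (eseq lambda gamma rho mu n) <= Be lambda gamma beps.
Proof.
move=> /andP[l0 l1] /andP[g0 g1] b0 gb Hrho Hmu.
set C := (1 - gamma / beps)^-1.
have gb1 : gamma / beps < 1 by rewrite ltr_pdivrMr // mul1r.
have gbp : 0 <= gamma / beps by apply: divr_ge0; lra.
have C1 : 1 - gamma / beps > 0 by lra.
have HC : C * (1 - gamma / beps) = 1 by rewrite mulVf //; lra.
have C0 : 0 <= C by rewrite invr_ge0; lra.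
have HF : forall n, 0 <= Fseq gamma rho n <= C.
  elim=> [|n /andP[F0 F1]] /=; first by rewrite lexx C0.
  have [r0 r1] := Hrho n.
  have r1' : rho n * beps <= 1 by rewrite -ler_pdivlMr // .
  have P0 : 0 <= gamma * rho n * Fseq gamma rho n.
    by apply: mulr_ge0 => //; apply: mulr_ge0; lra.
  apply/andP; split; first lra.
  have : gamma * rho n * Fseq gamma rho n <= gamma / beps * C.
    rewrite -!mulrA; apply: ler_wpM2l; first lra.
    apply: (@le_trans _ _ (rho n * C)); first by apply: ler_wpM2l; lra.
    apply: ler_wpM2r => //. by move: r1; rewrite mul1r.
  nra.
set K := lambda + (1 - lambda) * C.
have HM : forall n, 0 <= Mseq lambda gamma rho n <= K.
  move=> n; have /andP[F0 F1] := HF n; rewrite /Mseq /K.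
  apply/andP; split; nra.
have lg1 : 0 < 1 - lambda * gamma by nra.
have HB : Be lambda gamma beps = (1 - lambda * gamma)^-1 * K by [].
have HBK : (1 - lambda * gamma) * Be lambda gamma beps = K.
  by rewrite HB mulrA mulfV ?mul1r //; lra.
have K0 : 0 <= K by have := HM 0%N; lra.
have B0 : 0 <= Be lambda gamma beps by rewrite HB; apply: mulr_ge0 => //; rewrite invr_ge0; lra.
have Hall : forall n, (forall i, 0 <= eaux lambda gamma rho mu n 0 i) /\
   \sum_(i < m) eaux lambda gamma rho mu n 0 i <= Be lambda gamma beps.
  elim=> [|n [IH1 IH2]] /=.
    split=> [i|]; rewrite ?big1 ?mxE //= => i _; by rewrite mxE.
  have [mu0 mu1] := Hmu n; have /andP[M0 M1] := HM n.
  split=> [i|].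
    rewrite !mxE; apply: addr_ge0; apply: mulr_ge0 => //; nra.
  under eq_bigr => i _ do rewrite !mxE.
  rewrite big_split /= -!mulr_sumr mu1 mulr1.
  set s := \sum_(i < m) _ in IH2 *.
  have : gamma * lambda * s <= gamma * lambda * Be lambda gamma beps.
    by apply: ler_wpM2l => //; apply: mulr_ge0; lra.
  nra.
move=> n; have [H1 H2] := Hall n.+1.
rewrite /eseq; exact: (le_trans (enorm_le_sum H1) H2).
Qed.

Theorem lemma2 (R : rcfType) (Agent : Type) (m : nat)
  (lambda gamma beps : R)
  (rho rhohat : Agent -> nat -> R) (mu muhat : Agent -> nat -> 'rV[R]_m) :
  0 < lambda < 1 -> 0 < gamma < 1 -> 0 < beps -> gamma < beps ->
  (forall k n, 0 < rho k n /\ rho k n <= 1 / beps) ->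
  (forall k n, 0 < rhohat k n /\ rhohat k n <= 1 / beps) ->
  (forall k n, prob_vec (mu k n)) ->
  (forall k n, prob_vec (muhat k n)) ->
  forall k n,
    enorm (eseq lambda gamma (rho k) (mu k) n) <= Be lambda gamma beps /\
    enorm (eseq lambda gamma (rhohat k) (muhat k) n) <= Be lambda gamma beps.
Proof.
move=> hl hg hb hgb h1 h2 h3 h4 k n; split; apply: one_seq => //.
Qed.
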